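(* Let $\Lambda$ be a cohomology algebra of $b^+=1$ type with $I_T=0$ and $\Gamma\cong\langle1\rangle\oplus n\langle-1\rangle$, $0\le n\le 9$, with orthogonal basis $\{H,E_1,\dots,E_n\}$ of $\Lambda^2$, $H\cdot H=1$, $E_i\cdot E_i=-1$. Let $A=aH-\sum_{i=1}^n b_iE_i\ne0$ be reduced with $A\cdot A\ge0$. Then $c_0=3H-\sum_{i=1}^nE_i$ is an adjunction class and $$h(A)=h_{c_0}(A)=\frac{(a-1)(a-2)-\sum_{i=1}^n b_i(b_i-1)}{2}=\binom{a-1}{2}-\sum_{i=1}^n\binom{b_i}{2}.$$
   Context: Notation: $\Lambda$ a cohomology algebra (graded commutative algebra over $\mathbb{Z}$, free of finite rank in each degree, $p:\Lambda^4\cong\mathbb{Z}$ with perfect pairings $\Lambda^i\times\Lambda^{4-i}\to\mathbb{Z}$); $\Gamma(x,y)=x\cdot y=p(xy)$ on $\Lambda^2$, signature $\sigma$; $I_T\subseteq\Lambda^2$ is the subgroup generated by products of elements of $\Lambda^1$. Characteristic: $c\cdot A\equiv A\cdot A\pmod 2$ for all $A$. Since $I_T=0$, the adjunction classes are the characteristic classes $c$ with $c\cdot c>\sigma(\Lambda)$ (equivalently $c\cdot c\ge\sigma+8$). $h_c(A)=1+\frac{A\cdot A-|c\cdot A|}{2}$ for $A\ne0$, $h_c(0)=0$; $h(A)=\max_c h_c(A)$ over adjunction classes. $A=aH-\sum b_iE_i$ is reduced if $b_1\ge b_2\ge\dots\ge b_n\ge0$ and $a\ge b_1$ if $n=1$,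 $a\ge b_1+b_2$ if $n=2$, $a\ge b_1+b_2+b_3$ if $n\ge3$ ($a\ge0$ if $n=0$). *)

(* Defs.v *)
From HB Require Import structures.
From mathcomp Require Import all_boot all_order all_algebra.
Set Implicit Arguments. Unset Strict Implicit. Unset Printing Implicit Defensive.
Import Order.TTheory GRing.Theory Num.Theory.
Local Open Scope ring_scope.

(* Lambda^2 of a cohomology algebra with Gamma = <1> + n<-1>, expressed in the
   orthogonal basis {H, E_1, ..., E_n} (E_{i+1} is indexed by i : 'I_n).
   A class (a, b) stands for  a H - \sum_i b_i E_i. *)
Definition cls (n : nat) := (int * {ffun 'I_n -> int})%type.

Definition mkcls (n : nat) (a : int) (b : 'I_n -> int) : cls n := (a, [ffun i => b i]).

Definition zero_cls (n : nat) : cls n := (0, [ffun _ => 0]).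

Definition dot (n : nat) (x y : cls n) : int :=
  x.1 * y.1 - \sum_(i < n) x.2 i * y.2 i.

Definition sigma (n : nat) : int := 1 - n%:Z.

Definition characteristic (n : nat) (c : cls n) : Prop :=
  forall A : cls n, (dot c A = dot A A %[mod 2])%Z.

(* I_T = 0: adjunction classes = characteristic classes with c.c > sigma. *)
Definition adjunction (n : nat) (c : cls n) : Prop :=
  characteristic c /\ sigma n < dot c c.

Definition h_c (n : nat) (c A : cls n) : int :=
  if A == zero_cls n then 0 else 1 + ((dot A A - `|dot c A|) %/ 2)%Z.

Definition is_h (n : nat) (A : cls n) (v : int) : Prop :=
  (exists2 c, adjunction c & h_c c A = v) /\
  (forall c, adjunction c -> h_c c A <= v).

Definition reduced (n : nat) (A : cls n) : Prop :=
  (forall i j : 'I_n, (i <= j)%N -> A.2 j <= A.2 i) /\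
  (forall i : 'I_n, 0 <= A.2 i) /\
  \sum_(i < n | (i < 3)%N) A.2 i <= A.1.

Definition c0 (n : nat) : cls n := mkcls 3 (fun _ => 1).

(* Main.v *)
Require Import Defs.
From HB Require Import structures.
From mathcomp Require Import all_boot all_order all_algebra.
From mathcomp Require Import zify ring lra.
Import Order.TTheory GRing.Theory Num.Theory.
Local Open Scope ring_scope.
Lemma binom2 (u : nat) : ('C(u,2) * 2 = u * u.-1)%N.
Proof. elim: u => [//|u IH]. rewrite binS bin1 mulnDl IH. case: u {IH} => [|u] //=. lia. Qed.

Lemma abel (x b : nat -> int) (N : nat) : \sum_(i<N) x i * b i =
  \sum_(j<N) (b j - b j.+1) * (\sum_(i < j.+1) x i) + b N * \sum_(i<N) x i.
Proof.
elim: N => [|N IH]; first by rewrite !big_ord0 mulr0 addr0.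
rewrite big_ord_recr /= IH.
rewrite [\sum_(j < N.+1) _]big_ord_recr /=.
rewrite [\sum_(i < N.+1) x i]big_ord_recr /=.
set P := \sum_(i < N) x i. set S := \sum_(i < N) _. ring.
Qed.

Lemma even_sum (p : nat) (f : nat -> int) : (forall i, (i < p)%N -> (2 %| f i)%Z) ->
  (2 %| \sum_(i<p) f i)%Z.
Proof. move=> H. apply: rpred_sum => i _. exact: H. Qed.
Lemma sum_lin (p : nat) (f : nat -> int) (c1 c2 : int) :
  \sum_(i<p) (c1 * f i + c2) = c1 * \sum_(i<p) f i + c2 * p%:Z.
Proof. by rewrite big_split /= -mulr_sumr sumr_const card_ord -mulr_natr natz. Qed.

Lemma prefix (n p : nat) (Y : nat -> int) (k : int) :
 (0 < p)%N -> (p <= n)%N -> (p <= 9)%N -> 0 < k -> (2 %| k - 1)%Z ->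
 (forall i, (i < n)%N -> 1 <= Y i) ->
 (forall i, (i < n)%N -> (2 %| Y i - 1)%Z) ->
 \sum_(i<n) (Y i ^+ 2 - 1) <= k ^+ 2 - 9 ->
 \sum_(i<p) (Y i - 1) <= (k - 3) * (minn p 3)%:Z.
Proof.
move=> p0 pn p9 k0 kodd Y1 Yodd Hs.
have Hpos : forall i, (i < n)%N -> 0 <= Y i ^+ 2 - 1.
  move=> i /Y1 h; rewrite expr2; nia.
set Q := \sum_(i<p) (Y i ^+ 2 - 1).
have HQ : Q <= k ^+ 2 - 9.
  apply: le_trans Hs; rewrite /Q (big_ord_widen n (fun i => Y i ^+ 2 - 1) pn).
  rewrite big_mkcond /=; apply: ler_sum => i _.
  by case: ifP => _ //; apply: Hpos.
have Q0 : 0 <= Q by apply: sumr_ge0 => i _; apply: Hpos; apply: leq_trans pn.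
have k3 : 3 <= k by rewrite expr2 in HQ; nia.
set T := \sum_(i<p) (Y i - 1).
have Tev : (2 %| T)%Z by apply: rpred_sum => i _; apply: Yodd; apply: leq_trans pn.
have CS : forall L : int, 0 <= L -> L <= T + p%:Z -> L ^+ 2 <= p%:Z * (Q + p%:Z).
  move=> L L0 LT.
  have H1 : \sum_(i<p) (2 * p%:Z * L * (Y i - 1) + (2 * p%:Z * L - L^+2 - p%:Z^+2))
            <= \sum_(i<p) ((p%:Z ^+ 2) * (Y i ^+ 2 - 1) + 0).
    apply: ler_sum => i _.
    have := sqr_ge0 (p%:Z * Y i - L).
    rewrite !expr2; nia.
  rewrite (sum_lin p (fun i => Y i - 1)) (sum_lin p (fun i => Y i ^+ 2 - 1)) mul0r addr0 -/T -/Q in H1.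
  have pp : 0 < p%:Z by rewrite ltz_nat.
  rewrite !expr2 in H1 *.
  have H2 : 0 <= p%:Z * (p%:Z * Q + p%:Z * p%:Z - L * L).
    have H3 : 0 <= 2 * p%:Z * L * (T + p%:Z - L) by apply: mulr_ge0; nia.
    nia.
  rewrite pmulr_rge0 // in H2; nia.
rewrite leNgt; apply/negP => HT.
have HT2 : (k - 3) * (minn p 3)%:Z + 2 <= T.
  have : (2 %| (k - 3) * (minn p 3)%:Z)%Z.
    apply: dvdz_mulr. have -> : k - 3 = (k - 1) - 2 by ring.
    by apply: rpredB => //.
  lia.
have Tp : 0 <= T by apply: sumr_ge0 => i _; have := Y1 i (leq_trans (ltn_ord i) pn); lia.
have mp : (0 <= (minn p 3)%:Z) by [].
have := CS ((k - 3) * (minn p 3)%:Z + 2 + p%:Z) ltac:(nia) ltac:(lia).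
move: HQ HT2 Q0 Tp; rewrite !expr2.
move: (Q) (T) => q t.
case: p {CS HT Tev mp Q T} p0 pn p9 => [|[|[|[|[|[|[|[|[|[|p]]]]]]]]]] //= _ _ _; nia.
Qed.

Lemma ind_sum (p : nat) : \sum_(i<p) (if (i < 3)%N then 1 else 0 : int) = (minn p 3)%:Z.
Proof. elim: p => [|p IH]; first by rewrite big_ord0. rewrite big_ord_recr /= IH. case: ifP; lia. Qed.

Lemma key n (a : int) (b : 'I_n -> int) (k : int) (m : 'I_n -> int) :
 (n <= 9)%N -> (forall i j : 'I_n, (i <= j)%N -> b j <= b i) -> (forall i, 0 <= b i) ->
 \sum_(i < n | (i < 3)%N) b i <= a ->
 0 < k -> (2 %| k - 1)%Z -> (forall i, (2 %| m i - 1)%Z) ->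
 \sum_(i<n) (m i ^+ 2 - 1) <= k ^+ 2 - 9 ->
 3 * a - \sum_(i<n) b i <= k * a - \sum_(i<n) `|m i| * b i.
Proof.
move=> n9 bdec bpos ba k0 kodd modd Hs.
pose Bn (j : nat) : int := oapp b 0 (insub j : option 'I_n).
pose Ym (j : nat) : int := oapp (fun i => `|m i|) 1 (insub j : option 'I_n).
have BnE : forall i : 'I_n, Bn i = b i by move=> i; rewrite /Bn valK.
have YmE : forall i : 'I_n, Ym i = `|m i| by move=> i; rewrite /Ym valK.
have Bnn : Bn n = 0 by rewrite /Bn insubN // ltnn.
have E1 : \sum_(i<n) `|m i| * b i - \sum_(i<n) b i = \sum_(i<n) (Ym i - 1) * Bn i.
  rewrite -sumrB; apply: eq_bigr => i _; rewrite YmE BnE; ring.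
suff : \sum_(i<n) (Ym i - 1) * Bn i <= (k - 3) * a.
  rewrite -E1; lra.
have k3 : 3 <= k.
  have : 0 <= \sum_(i<n) (m i ^+ 2 - 1).
    apply: sumr_ge0 => i _; have := modd i; rewrite expr2 => h.
    have : (m i <= -1) \/ (1 <= m i) by lia.
    case; nia.
  rewrite expr2 in Hs; nia.
rewrite (abel (fun i => Ym i - 1) Bn n) Bnn mul0r addr0.
have Hd : forall j : 'I_n, 0 <= Bn j - Bn j.+1.
  move=> j; case: (ltnP j.+1 n) => hj.
    rewrite BnE (_ : Bn j.+1 = b (Ordinal hj)); last by rewrite -BnE.
    by rewrite subr_ge0; apply: bdec => /=.
  have -> : Bn j.+1 = 0 by rewrite /Bn insubN // -leqNgt.
  by rewrite BnE subr0.
apply: (@le_trans _ _ (\sum_(j<n) (Bn j - Bn j.+1) * ((k - 3) * (minn j.+1 3)%:Z))).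
  apply: ler_sum => j _; apply: ler_wpM2l; first exact: Hd.
  apply: (@prefix n) => //.
  - exact: leq_trans (ltn_ord j) n9.
  - move=> i hi; rewrite (_ : Ym i = Ym (Ordinal hi)) // YmE; have := modd (Ordinal hi); lia.
  - move=> i hi; rewrite (_ : Ym i = Ym (Ordinal hi)) // YmE; have := modd (Ordinal hi); lia.
  - apply: le_trans Hs; rewrite le_eqVlt; apply/orP; left; apply/eqP/eq_bigr => i _.
    by rewrite YmE real_normK ?num_real.
have -> : \sum_(j<n) (Bn j - Bn j.+1) * ((k - 3) * (minn j.+1 3)%:Z)
   = (k - 3) * \sum_(j<n) (Bn j - Bn j.+1) * (\sum_(i < j.+1) (if (i < 3)%N then 1 else 0 : int)).
  rewrite mulr_sumr; apply: eq_bigr => j _; rewrite ind_sum; ring.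
have := abel (fun i => if (i < 3)%N then 1 else 0 : int) Bn n.
rewrite Bnn mul0r addr0 /= => <-.
apply: ler_wpM2l; first lia.
apply: le_trans ba; rewrite [X in _ <= X]big_mkcond /=; rewrite le_eqVlt; apply/orP; left; apply/eqP/eq_bigr => i _.
by rewrite BnE; case: ifP => _; ring.
Qed.

Lemma even_prod (x : int) : (2 %| x * (x - 1))%Z.
Proof.
have [h|h] := boolP (2 %| x)%Z; first exact: dvdz_mulr.
have h2 : (2 %| x - 1)%Z by lia.
exact: dvdz_mull.
Qed.

Lemma odd_sq8 (x : int) : (2 %| x - 1)%Z -> (8 %| x ^+ 2 - 1)%Z.
Proof.
move=> /dvdzP [q hq].
have /dvdzP [r hr] := even_prod (q + 1).
apply/dvdzP; exists r.
have -> : x = q * 2 + 1 by lia.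
rewrite expr2; nia.
Qed.

Lemma binz (x : int) : 0 <= x -> 2 * ('C(`|x|%N, 2))%:Z = x * (x - 1).
Proof.
case: x => // u _ /=. have := binom2 u. nia.
Qed.

Lemma dot_c0 n (A : cls n) : dot (c0 n) A = 3 * A.1 - \sum_(i<n) A.2 i.
Proof. rewrite /dot /c0 /mkcls /=; congr (_ - _); apply: eq_bigr => i _; by rewrite ffunE mul1r. Qed.

Lemma char_c0 n : characteristic (c0 n).
Proof.
move=> [a b]; rewrite dot_c0 /dot /=.
have : (2 %| (a * (a - 1) - 2 * a) - \sum_(i<n) (b i * (b i - 1)))%Z.
  apply: rpredB; first by apply: rpredB; [exact: even_prod | exact: dvdz_mulr].
  by apply: rpred_sum => i _; exact: even_prod.
have -> : \sum_(i<n) b i * (b i - 1) = \sum_(i<n) b i * b i - \sum_(i<n) b i.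
  by rewrite -sumrB; apply: eq_bigr => i _; ring.
move=> h; apply/eqP; rewrite eqz_mod_dvd.
move: h; set S1 := \sum_(i<n) b i; set S2 := \sum_(i<n) b i * b i => h.
have -> : 3 * a - S1 - (a * a - S2) = - (a * (a - 1) - 2 * a - (S2 - S1)) by ring.
by rewrite rpredN.
Qed.

Lemma c0c0 n : dot (c0 n) (c0 n) = 9 - n%:Z.
Proof.
rewrite dot_c0 /c0 /mkcls /=.
rewrite (eq_bigr (fun _ => 1)); last by move=> i _; rewrite ffunE.
rewrite sumr_const card_ord -mulr_natr natz mul1r; lia.
Qed.

Lemma arith8 (K S : int) (n : nat) : 1 - n%:Z < K - S -> (8 %| S - n%:Z)%Z -> (8 %| K - 1)%Z ->
  S - n%:Z <= K - 9.
Proof. lia. Qed.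

Lemma arithN (x y z : int) : - z <= y -> - x - z <= - (x - y).
Proof. lia. Qed.

Lemma adj_bound n (A : cls n) (c : cls n) : (n <= 9)%N -> reduced A -> adjunction c ->
  dot (c0 n) A <= `|dot c A|.
Proof.
move: A c => [a b] [k m] n9 [bdec [bpos ba]] [hch hcc]; rewrite /= in bdec bpos ba.
rewrite dot_c0 /=.
have kodd : (2 %| k - 1)%Z.
  have := hch (1, [ffun _ => 0]); rewrite /dot /=.
  have e1 : \sum_(i<n) m i * [ffun _ : 'I_n => 0] i = 0 by apply: big1 => i _; rewrite ffunE mulr0.
  have e2 : \sum_(i<n) [ffun _ : 'I_n => 0] i * [ffun _ : 'I_n => (0:int)] i = 0
    by apply: big1 => i _; rewrite ffunE mulr0.
  rewrite e1 e2 => h; lia.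
have modd : forall i, (2 %| m i - 1)%Z.
  move=> i; pose f := [ffun j : 'I_n => if j == i then 1 else 0 : int].
  have := hch (0, f); rewrite /dot /=.
  have e1 : \sum_(j<n) m j * f j = m i.
    rewrite (bigD1 i) //= big1 ?addr0; first by rewrite /f ffunE eqxx mulr1.
    by move=> j hj; rewrite /f ffunE (negbTE hj) mulr0.
  have e2 : \sum_(j<n) f j * f j = 1.
    rewrite (bigD1 i) //= big1 ?addr0; first by rewrite /f ffunE eqxx mulr1.
    by move=> j hj; rewrite /f ffunE (negbTE hj) mulr0.
  rewrite e1 e2 => h; lia.
have Hs : \sum_(i<n) (m i ^+ 2 - 1) <= k ^+ 2 - 9.
  have e : \sum_(i<n) (m i ^+ 2 - 1) = \sum_(i<n) m i * m i - n%:Z.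
    rewrite sumrB sumr_const card_ord -mulr_natr natz mul1r.
    by congr (_ - _); apply: eq_bigr => i _; rewrite expr2.
  have h8 : (8 %| \sum_(i<n) (m i ^+ 2 - 1))%Z by apply: rpred_sum => i _; exact: odd_sq8.
  have k8 := odd_sq8 _ kodd.
  move: hcc h8 k8; rewrite /sigma /dot /= e expr2 => hcc h8 k8.
  exact: arith8 hcc h8 k8.
have kn0 : k != 0 by apply/eqP => k0; rewrite k0 in kodd; lia.
have lo : \sum_(i<n) m i * b i <= \sum_(i<n) `|m i| * b i.
  by apply: ler_sum => i _; have := bpos i; nia.
have hi : - \sum_(i<n) `|m i| * b i <= \sum_(i<n) m i * b i.
  rewrite -sumrN; by apply: ler_sum => i _; have := bpos i; nia.
rewrite /dot /=.
have [kp|kn] := ltP 0 k.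
  have := @key n a b k m n9 bdec bpos ba kp kodd modd Hs.
  move=> H; apply: le_trans H _; apply: le_trans (ler_norm _).
  by rewrite lerD2l lerN2.
have kp : 0 < - k by rewrite oppr_gt0 lt_neqAle kn0 kn.
have kodd' : (2 %| - k - 1)%Z by lia.
have modd' : forall i, (2 %| - m i - 1)%Z.
  by move=> i; have := modd i; lia.
have Hs' : \sum_(i<n) ((- m i) ^+ 2 - 1) <= (- k) ^+ 2 - 9.
  by rewrite sqrrN (eq_bigr (fun i => m i ^+ 2 - 1)) // => i _; rewrite sqrrN.
have := @key n a b (- k) (fun i => - m i) n9 bdec bpos ba kp kodd' modd' Hs'.
have e : \sum_(i<n) `|- m i| * b i = \sum_(i<n) `|m i| * b i.
  by apply: eq_bigr => i _; rewrite normrN.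
move=> H; rewrite /= e in H; apply: le_trans H _; rewrite -normrN; apply: le_trans (ler_norm _).
by rewrite mulNr; apply: arithN.
Qed.

Lemma arith_h (X Y : int) : (Y = X %[mod 2])%Z -> 0 <= Y -> 2 * (1 + ((X - `|Y|) %/ 2)%Z) = 2 + X - Y.
Proof. lia. Qed.

Lemma arith_le (X Y Z : int) : (Y = X %[mod 2])%Z -> (Z = X %[mod 2])%Z -> Z <= `|Y| -> 0 <= Z ->
  1 + ((X - `|Y|) %/ 2)%Z <= 1 + ((X - `|Z|) %/ 2)%Z.
Proof. lia. Qed.

Lemma half (x y : int) : 2 * x = 2 * y -> x = y.
Proof. lia. Qed.

Lemma a_pos n (A : cls n) : A <> zero_cls n -> reduced A -> 1 <= A.1.
Proof.
case: A => a b nz [bdec [bpos ba]]; rewrite /= in bdec bpos ba *.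
have s0 : 0 <= \sum_(i < n | (i < 3)%N) b i by apply: sumr_ge0.
have ag := le_trans s0 ba; suff : a != 0 by lia.
apply/eqP => a0.
apply: nz; rewrite /zero_cls -a0; congr (_, _); apply/ffunP => i; rewrite ffunE.
have n0 : (0 < n)%N by case: n i {bdec bpos ba s0 b} => [[]|].
pose i0 : 'I_n := Ordinal n0.
have h1 := bdec i0 i (leq0n _).
have h2 : b i0 <= \sum_(i < n | (i < 3)%N) b i.
  rewrite (bigD1 i0) //= lerDl; apply: sumr_ge0 => j _; exact: bpos.
rewrite a0 in ba; have := le_trans h1 (le_trans h2 ba); have := bpos i; rewrite a0 => p q; by apply/eqP; rewrite eq_le q p.
Qed.

Lemma arith9 (n : nat) (a S : int) : (n <= 9)%N ->
  (8 * n%:Z <= 9 * 9 - 9 -> 3 * a - S <= 9 * a - 3 * S) -> 0 <= 3 * a - S.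
Proof. lia. Qed.

Lemma c0A_ge0 n (A : cls n) : (n <= 9)%N -> reduced A -> 0 <= dot (c0 n) A.
Proof.
case: A => a b n9 [bdec [bpos ba]]; rewrite /= in bdec bpos ba.
have H := @key n a b 9 (fun _ => 3) n9 bdec bpos ba isT isT (fun _ => isT).
have e1 : \sum_(i<n) ((3 : int) ^+ 2 - 1) = 8 * n%:Z.
  rewrite sumr_const card_ord -mulr_natr natz expr2; lia.
have e2 : \sum_(i<n) `|(3 : int)| * b i = 3 * \sum_(i<n) b i by rewrite mulr_sumr.
rewrite e1 e2 expr2 in H; rewrite dot_c0 /=.
exact: arith9 n9 H.
Qed.

Theorem mainTheorem9 (n : nat) (A : cls n) :
  (n <= 9)%N ->
  A <> zero_cls n ->
  reduced A ->
  0 <= dot A A ->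
  [/\ adjunction (c0 n),
      is_h A (h_c (c0 n) A),
      2 * h_c (c0 n) A = (A.1 - 1) * (A.1 - 2) - \sum_(i < n) A.2 i * (A.2 i - 1)
    & h_c (c0 n) A = ('C(`|A.1 - 1|%N, 2))%:Z - \sum_(i < n) ('C(`|A.2 i|%N, 2))%:Z].
Proof.
move=> n9 nz red AA.
have adj0 : adjunction (c0 n) by split; [exact: char_c0 | rewrite c0c0 /sigma; lia].
have Anz : (A == zero_cls n) = false by apply/eqP.
have c0A := @c0A_ge0 n A n9 red.
have hpar := char_c0 n A.
have a1 := @a_pos n A nz red.
have h2 : 2 * h_c (c0 n) A = (A.1 - 1) * (A.1 - 2) - \sum_(i < n) A.2 i * (A.2 i - 1).
  rewrite /h_c Anz arith_h // dot_c0 /dot.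
  have -> : \sum_(i<n) A.2 i * (A.2 i - 1) = \sum_(i<n) A.2 i * A.2 i - \sum_(i<n) A.2 i.
    by rewrite -sumrB; apply: eq_bigr => i _; ring.
  ring.
split => //.
- split; first by exists (c0 n).
  move=> c hc; rewrite /h_c Anz.
  apply: arith_le => //; first exact: hc.1.
  - exact: adj_bound.
have e1 : 2 * ('C(`|A.1 - 1|%N, 2))%:Z = (A.1 - 1) * (A.1 - 2).
  rewrite binz; last lia.
  rewrite (_ : ((A.1 - 1%Z) - 1 = A.1 - 2)) //; lia.
have e2 : 2 * \sum_(i < n) ('C(`|A.2 i|%N, 2))%:Z = \sum_(i < n) A.2 i * (A.2 i - 1).
  rewrite mulr_sumr; apply: eq_bigr => i _; rewrite binz //.
  by case: red => _ [bp _]; exact: bp.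
apply: half; rewrite h2 [X in _ = X]mulrBr e1 e2 //.
Qed.
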